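(* Assume the Collatz conjecture: for every positive integer $n$ there is $j\ge 0$ with $T_0^{(j)}(n)=1$. Then for every integer $k\ge 0$ and every positive integer $n$, the $T_k$-trajectory $n, T_k(n), T_k^{(2)}(n),\dots$ eventually enters the cycle $3^k\to 2\cdot 3^k\to 3^k$.
   Context: For an integer $k\ge 0$, define $T_k$ on the positive integers by $T_k(n)=(3n+3^k)/2$ if $n$ is odd and $T_k(n)=n/2$ if $n$ is even. In particular $T_0(n)=(3n+1)/2$ for odd $n$ and $n/2$ for even $n$. For any map $T$, $T^{(j)}$ denotes its $j$-fold iterate, with $T^{(0)}$ the identity. *)

(* Defs.v *)
From mathcomp Require Import all_boot.

Definition T (k n : nat) : nat :=
  if odd n then (3 * n + 3 ^ k)./2 else n./2.

(* Main.v *)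
Require Import Defs.
From mathcomp Require Import all_boot.
From mathcomp Require Import zify.

Lemma half2 q : (2 * q)./2 = q.
Proof. by rewrite mul2n doubleK. Qed.

Lemma even_ex (s : nat) : ~~ odd s -> exists q, s = 2 * q.
Proof.
move=> h; exists s./2; have := odd_double_half s; rewrite (negbTE h) add0n -mul2n.
by move=> ->.
Qed.

Lemma T_pos k n : 0 < n -> 0 < T k n.
Proof.
move=> hn; rewrite /T; case: ifP => ho.
- have [q hq] : exists q, 3 * n + 3 ^ k = 2 * q.
    apply: even_ex; rewrite oddD oddM oddX /= ho /=; by rewrite orbT.
  rewrite hq half2; have := expn_gt0 3 k; lia.
- have [q hq] := @even_ex _ (negbT ho); rewrite hq half2; lia.
Qed.

Lemma iter_pos k j n : 0 < n -> 0 < iter j (T k) n.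
Proof. by move=> hn; elim: j => //= j IH; apply: T_pos. Qed.

Lemma step k i m : i < k -> 0 < m -> 3 ^ i %| m ->
  exists j, 3 ^ i.+1 %| iter j (T k) m.
Proof.
move=> hik; elim: m {-2}m (leqnn m) => [|M IH] m hm hpos hd; first lia.
case ho: (odd m).
- exists 1; rewrite /= /T ho.
  have [q hq] : exists q, 3 * m + 3 ^ k = 2 * q.
    apply: even_ex; rewrite oddD oddM oddX /= ho /=; by rewrite orbT.
  rewrite hq half2.
  have : 3 ^ i.+1 %| 2 * q.
    rewrite -hq dvdn_add //; first by rewrite expnS dvdn_mul.
    by apply: dvdn_exp2l.
  by rewrite Gauss_dvdr // coprimeXl.
- have [q hq] := @even_ex _ (negbT ho).
  have hq' : 3 ^ i %| q.
    by move: hd; rewrite hq Gauss_dvdr // coprimeXl.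
  have [j hj] := IH q ltac:(lia) ltac:(lia) hq'.
  exists j.+1; rewrite iterSr /T ho hq half2; exact: hj.
Qed.

Lemma reach k i n : i <= k -> 0 < n -> exists j, 3 ^ i %| iter j (T k) n.
Proof.
elim: i => [|i IH] hi hn; first by exists 0; rewrite expn0 dvd1n.
have [j hj] := IH ltac:(lia) hn.
have [j' hj'] := @step k i _ (ltac:(lia) : i < k) (@iter_pos k j n hn) hj.
by exists (j' + j); rewrite iterD.
Qed.

Lemma T_scale k m : T k (3 ^ k * m) = 3 ^ k * T 0 m.
Proof.
rewrite /T oddM oddX /= orbT /= expn0.
case ho: (odd m).
- have [q hq] : exists q, 3 * m + 1 = 2 * q.
    by apply: even_ex; rewrite oddD oddM /= ho.
  rewrite hq half2.
  have -> : 3 * (3 ^ k * m) + 3 ^ k = 2 * (3 ^ k * q).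
    by rewrite mulnA (mulnC 3) -mulnA -[X in _ + X]muln1 -mulnDr hq mulnCA.
  by rewrite half2.
- have [q hq] := @even_ex _ (negbT ho).
  by rewrite hq mulnCA !half2.
Qed.

Lemma iter_scale k j m : iter j (T k) (3 ^ k * m) = 3 ^ k * iter j (T 0) m.
Proof. by elim: j => //= j ->; rewrite T_scale. Qed.

Lemma cyc i : iter i (T 0) 1 = 1 \/ iter i (T 0) 1 = 2.
Proof.
elim: i => [|i [] IH] /=; first by left.
- by right; rewrite IH.
- by left; rewrite IH.
Qed.

Theorem corollary1 :
  (forall n : nat, 0 < n -> exists j : nat, iter j (T 0) n = 1) ->
  forall k n : nat, 0 < n ->
    exists J : nat, forall j : nat, J <= j ->
      iter j (T k) n = 3 ^ k \/ iter j (T k) n = 2 * 3 ^ k.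
Proof.
move=> C k n hn.
have [j0 hj0] := @reach k k n (leqnn k) hn.
have [m hm] : exists m, iter j0 (T k) n = 3 ^ k * m.
  by exists (iter j0 (T k) n %/ 3 ^ k); rewrite mulnC divnK.
have hmpos : 0 < m.
  have := @iter_pos k j0 n hn; rewrite hm muln_gt0; by case/andP.
have [j1 hj1] := C m hmpos.
exists (j1 + j0) => j hj.
have -> : j = (j - (j1 + j0)) + j1 + j0 by lia.
rewrite iterD hm iterD iter_scale hj1 iter_scale.
by case: (cyc (j - (j1 + j0))) => ->; [left; rewrite muln1 | right; rewrite mulnC].
Qed.
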